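(* Let $\mathfrak g=\mathfrak{sl}_4(\mathbb C)$ with simple roots $\alpha_1,\alpha_2,\alpha_3$. Let $e=X_{\alpha_1}+X_{\alpha_2+\alpha_3}$ (orbit with partition $(3,1)$). Let $\mathfrak n_1$ be the span of $$H_{\alpha_1},\ H_{\alpha_2},\ X_{\alpha_1},\ X_{\alpha_2},\ X_{-\alpha_2},\ X_{-\alpha_1}+X_{\alpha_3},\ X_{-\alpha_3},\ X_{-\alpha_1-\alpha_2},\ X_{-\alpha_2-\alpha_3},\ X_{-\alpha_1-\alpha_2-\alpha_3}.$$ Then $\mathfrak n_1$ is a complement of $\mathfrak g^e$ in $\mathfrak g$ that is not $\operatorname{ad}h^+$-invariant, where $h^+=2H_{\alpha_1}+2H_{\alpha_2}+2H_{\alpha_3}$. Moreover, the transverse Poisson structure $\Lambda_{N_1}(q)$ on $N_1=e+\mathfrak n_1^\perp$ is not polynomial: some of its entries are rational functions of $q$ that are not polynomials.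
   Context: $(H_\alpha,X_\alpha,X_{-\alpha})$ denote Chevalley basis elements and $K$ is the Killing form. Transverse Poisson structure. Choose a basis $Z_1,\dots,Z_k$ of $\mathfrak g^e$ and a basis $X_1,\dots,X_p$ of the complement $\mathfrak n$. Let $(\overline{Z_i},\overline{X_j})$ be the $K$-dual basis, and identify $\mathfrak n^\perp$ with $\mathbb C^k$ via $q\mapsto\sum_s q_s\overline{Z_s}$. Define: - $C_N(q)_{l,m}=K(e+\sum_s q_s\overline{Z_s},[X_l,X_m])$; - $D_N(q)_{l,j}=K(\sum_s q_s\overline{Z_s},[X_l,Z_j])$; - $A_N(q)_{i,j}=K(\sum_s q_s\overline{Z_s},[Z_i,Z_j])$. Then $\Lambda_N(q)=A_N+{}^tD_N\,C_N^{-1}D_N$, defined where $C_N(q)$ is invertible; its entries are rational in $q$. *)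

(* Defs.v *)
From HB Require Import structures.
From mathcomp Require Import all_boot all_order all_algebra all_field.
From mathcomp Require Export mpoly.
Set Implicit Arguments. Unset Strict Implicit. Unset Printing Implicit Defensive.
Import Order.TTheory GRing.Theory Num.Theory.
Local Open Scope ring_scope.

Notation M4 := 'M[algC]_4.

(* Elementary matrix E_{ij} (indices 0..3) *)
Definition E (i j : nat) : M4 := delta_mx (inord i) (inord j).

Definition bra (x y : M4) : M4 := x *m y - y *m x.

Definition in_sl4 (x : M4) : Prop := \tr x = 0.

(* Killing form of sl_4: trace of ad x o ad y.  It is computed on gl_4 = sl_4 (+) C*1,
   which is an ad-invariant decomposition on whose second summand ad x o ad y vanishes,
   hence for x y in sl_4 this equals the trace on sl_4. *)
Definition Kill (x y : M4) : algC :=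
  \sum_(i < 4) \sum_(j < 4) (bra x (bra y (delta_mx i j))) i j.

Definition H (i : nat) : M4 := E i i - E i.+1 i.+1.   (* H_{alpha_{i+1}} *)
Definition Xa1 := E 0 1.   Definition Xa2 := E 1 2.   Definition Xa3 := E 2 3.
Definition Xa23 := E 1 3.
Definition Xm1 := E 1 0.   Definition Xm2 := E 2 1.   Definition Xm3 := E 3 2.
Definition Xm12 := E 2 0.  Definition Xm23 := E 3 1.  Definition Xm123 := E 3 0.

Definition nil_e : M4 := Xa1 + Xa23.

Definition hplus : M4 := 2%:R *: H 0 + 2%:R *: H 1 + 2%:R *: H 2.

Definition in_ge (x : M4) : Prop := in_sl4 x /\ bra x nil_e = 0.

Definition Xn (j : 'I_10) : M4 :=
  nth 0 [:: H 0; H 1; Xa1; Xa2; Xm2; Xm1 + Xa3; Xm3; Xm12; Xm23; Xm123] j.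

Definition in_n1 (x : M4) : Prop := exists c : 'I_10 -> algC, x = \sum_j c j *: Xn j.

Definition basis_ge (k : nat) (Z : 'I_k -> M4) : Prop :=
  (forall s, in_ge (Z s)) /\
  (forall c : 'I_k -> algC, \sum_s c s *: Z s = 0 -> forall s, c s = 0) /\
  (forall y, in_ge y -> exists c : 'I_k -> algC, y = \sum_s c s *: Z s).

(* Zb is the part of the K-dual basis of (Z, X) dual to Z *)
Definition dual_Z (k : nat) (Z Zb : 'I_k -> M4) : Prop :=
  (forall s, in_sl4 (Zb s)) /\
  (forall s i, Kill (Zb s) (Z i) = (s == i)%:R) /\
  (forall s j, Kill (Zb s) (Xn j) = 0).

Definition qZ (k : nat) (Zb : 'I_k -> M4) (q : 'I_k -> algC) : M4 :=
  \sum_s q s *: Zb s.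

Definition C_N (k : nat) (Zb : 'I_k -> M4) (q : 'I_k -> algC) : 'M[algC]_10 :=
  \matrix_(l, m) Kill (nil_e + qZ Zb q) (bra (Xn l) (Xn m)).
Definition D_N (k : nat) (Z Zb : 'I_k -> M4) (q : 'I_k -> algC) : 'M[algC]_(10, k) :=
  \matrix_(l, j) Kill (qZ Zb q) (bra (Xn l) (Z j)).
Definition A_N (k : nat) (Z Zb : 'I_k -> M4) (q : 'I_k -> algC) : 'M[algC]_k :=
  \matrix_(i, j) Kill (qZ Zb q) (bra (Z i) (Z j)).

Definition Lambda_N (k : nat) (Z Zb : 'I_k -> M4) (q : 'I_k -> algC) : 'M[algC]_k :=
  A_N Z Zb q + (D_N Z Zb q)^T *m invmx (C_N Zb q) *m D_N Z Zb q.

(* Main.v *)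
Require Import Defs.
From mathcomp Require Import all_boot all_order all_algebra all_field.
From mathcomp Require Import mpoly.
From mathcomp Require Import ring.
From Stdlib Require Import Classical.
Import GRing.Theory Num.Theory.
Local Open Scope ring_scope.

Definition m4 (f : nat -> nat -> algC) : M4 := \matrix_(i < 4, j < 4) f i j.

Lemma sum4 (F : 'I_4 -> algC) : \sum_(i < 4) F i = F (inord 0) + F (inord 1) + F (inord 2) + F (inord 3).
Proof.
rewrite !big_ord_recr big_ord0 /= add0r.
congr (_ + _ + _ + _); congr F; apply: val_inj; rewrite /= inordK //.
Qed.

Lemma m4_add f g : m4 f + m4 g = m4 (fun i j => f i j + g i j).
Proof. by apply/matrixP => i j; rewrite !mxE. Qed.
Lemma m4_sub f g : m4 f - m4 g = m4 (fun i j => f i j - g i j).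
Proof. by apply/matrixP => i j; rewrite !mxE. Qed.
Lemma m4_opp f : - m4 f = m4 (fun i j => - f i j).
Proof. by apply/matrixP => i j; rewrite !mxE. Qed.
Lemma m4_scale c f : c *: m4 f = m4 (fun i j => c * f i j).
Proof. by apply/matrixP => i j; rewrite !mxE. Qed.
Lemma m4_mul f g : m4 f *m m4 g =
  m4 (fun i j => f i 0%N * g 0%N j + f i 1%N * g 1%N j + f i 2%N * g 2%N j + f i 3%N * g 3%N j).
Proof. apply/matrixP => i j; rewrite !mxE sum4 !mxE !inordK //. Qed.
Lemma m4_tr f : \tr (m4 f) = f 0%N 0%N + f 1%N 1%N + f 2%N 2%N + f 3%N 3%N.
Proof. rewrite /mxtrace sum4 !mxE !inordK //. Qed.
Lemma m4_E a b : (a < 4)%N -> (b < 4)%N -> E a b = m4 (fun i j => ((i == a) && (j == b))%:R).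
Proof.
move=> Ha Hb; apply/matrixP => i j; rewrite !mxE.
by rewrite -!(inj_eq val_inj) /= !inordK.
Qed.
Lemma m4_0 : (0 : M4) = m4 (fun _ _ => 0).
Proof. by apply/matrixP => i j; rewrite !mxE. Qed.
Lemma m4_of (x : M4) : x = m4 (fun i j => x (inord i) (inord j)).
Proof. by apply/matrixP => i j; rewrite !mxE !inord_val. Qed.
Lemma m4_eq f g : (forall i j, (i < 4)%N -> (j < 4)%N -> f i j = g i j) -> m4 f = m4 g.
Proof. move=> H; apply/matrixP => i j; rewrite !mxE; exact: H. Qed.
Lemma m4_inj f g i j : m4 f = m4 g -> (i < 4)%N -> (j < 4)%N -> f i j = g i j.
Proof.
move=> /matrixP H Hi Hj; have := H (Ordinal Hi) (Ordinal Hj); by rewrite !mxE.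
Qed.
Lemma m4_entry f a b : (a < 4)%N -> (b < 4)%N -> m4 f (inord a) (inord b) = f a b.
Proof. by move=> Ha Hb; rewrite mxE !inordK. Qed.
Lemma m4_delta (i j : 'I_4) : delta_mx i j = m4 (fun a b => ((a == i) && (b == j))%:R).
Proof. by apply/matrixP => a b; rewrite !mxE. Qed.
Lemma sum44 (F : 'I_4 -> 'I_4 -> algC) : \sum_(i < 4) \sum_(j < 4) F i j =
  \sum_(i < 4) (F i (inord 0) + F i (inord 1) + F i (inord 2) + F i (inord 3)).
Proof. by apply: eq_bigr => i _; rewrite sum4. Qed.

Ltac m4s := repeat progress rewrite ?m4_mul ?m4_sub ?m4_add ?m4_scale ?m4_opp.

Lemma Kill_tr x y : Kill x y = 8%:R * \tr (x *m y) - 2%:R * \tr x * \tr y.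
Proof.
rewrite /Kill /bra sum44 sum4 !m4_delta !inordK //.
rewrite (m4_of x) (m4_of y).
m4s; rewrite !m4_tr !m4_entry //=.
ring.
Qed.

Lemma tr_bra x y : \tr (bra x y) = 0.
Proof. by rewrite /bra raddfB /= mxtrace_mulC subrr. Qed.

Lemma Kill_br x y z : Kill x (bra y z) = 8%:R * \tr (bra x y *m z).
Proof.
rewrite Kill_tr tr_bra mulr0 subr0; congr (_ * _).
rewrite /bra mulmxBr mulmxBl !raddfB /= !mulmxA; congr (_ - _).
by rewrite mxtrace_mulC mulmxA.
Qed.

Definition m4l (l : seq (seq algC)) : M4 := m4 (fun i j => nth 0 (nth [::] l i) j).

Ltac enum4 := apply: m4_eq => [[|[|[|[|?]]]] [|[|[|[|?]]]] Hi Hj] //=.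


Lemma sum10 (V : nmodType) (F : 'I_10 -> V) : \sum_(i < 10) F i =
  F (inord 0) + F (inord 1) + F (inord 2) + F (inord 3) + F (inord 4) +
  F (inord 5) + F (inord 6) + F (inord 7) + F (inord 8) + F (inord 9).
Proof.
rewrite !big_ord_recr big_ord0 /= add0r.
by congr (_ + _ + _ + _ + _ + _ + _ + _ + _ + _); congr F; apply: val_inj; rewrite /= inordK.
Qed.

Definition xi (t : algC) : M4 := E 2 0 + E 3 1 + t *: (E 3 2 - E 0 1).

Definition tab10 (l : seq (seq algC)) : 'M[algC]_10 := \matrix_(i < 10, j < 10) nth 0 (nth [::] l i) j.

Definition Ctab (t : algC) := tab10
[:: [:: 0; 0; 0; 0; 0; (- 16%:R + 16%:R * t); 0; 0; (8%:R); 0];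
  [:: 0; 0; 0; 0; 0; (8%:R - 16%:R * t); 0; 0; (- 8%:R); 0];
  [:: 0; 0; 0; (8%:R); 0; 0; 0; 0; 0; (- 8%:R)];
  [:: 0; 0; (- 8%:R); 0; 0; (8%:R); 0; (8%:R - 8%:R * t); 0; 0];
  [:: 0; 0; 0; 0; 0; 0; (- 8%:R); 0; 0; 0];
  [:: (16%:R - 16%:R * t); (- 8%:R + 16%:R * t); 0; (- 8%:R); 0; 0; 0; 0; 0; 0];
  [:: 0; 0; 0; 0; (8%:R); 0; 0; 0; 0; 0];
  [:: 0; 0; 0; (- 8%:R + 8%:R * t); 0; 0; 0; 0; 0; 0];
  [:: (- 8%:R); (8%:R); 0; 0; 0; 0; 0; 0; 0; 0];
  [:: 0; 0; (8%:R); 0; 0; 0; 0; 0; 0; 0]].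
Definition Ytab (t : algC) := tab10
[:: [:: 0; 0; 0; 0; 0; (1%:R - t) / (8%:R * (1 - t)); 0; (- 1%:R) / (8%:R * (1 - t)); (1%:R - 3%:R * t + 2%:R * t^+2) / (8%:R * (1 - t)); 0];
  [:: 0; 0; 0; 0; 0; (1%:R - t) / (8%:R * (1 - t)); 0; (- 1%:R) / (8%:R * (1 - t)); (2%:R - 4%:R * t + 2%:R * t^+2) / (8%:R * (1 - t)); 0];
  [:: 0; 0; 0; 0; 0; 0; 0; 0; 0; (1%:R - t) / (8%:R * (1 - t))];
  [:: 0; 0; 0; 0; 0; 0; 0; (- 1%:R) / (8%:R * (1 - t)); 0; 0];
  [:: 0; 0; 0; 0; 0; 0; (1%:R - t) / (8%:R * (1 - t)); 0; 0; 0];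
  [:: (- 1%:R + t) / (8%:R * (1 - t)); (- 1%:R + t) / (8%:R * (1 - t)); 0; 0; 0; 0; 0; 0; 0; 0];
  [:: 0; 0; 0; 0; (- 1%:R + t) / (8%:R * (1 - t)); 0; 0; 0; 0; 0];
  [:: (1%:R) / (8%:R * (1 - t)); (1%:R) / (8%:R * (1 - t)); 0; (1%:R) / (8%:R * (1 - t)); 0; 0; 0; 0; 0; (1%:R) / (8%:R * (1 - t))];
  [:: (- 1%:R + 3%:R * t - 2%:R * t^+2) / (8%:R * (1 - t)); (- 2%:R + 4%:R * t - 2%:R * t^+2) / (8%:R * (1 - t)); 0; 0; 0; 0; 0; 0; 0; 0];
  [:: 0; 0; (- 1%:R + t) / (8%:R * (1 - t)); 0; 0; 0; 0; (- 1%:R) / (8%:R * (1 - t)); 0; 0]].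

Lemma C_entry t (l m : 'I_10) : Kill (nil_e + xi t) (bra (Xn l) (Xn m)) = Ctab t l m.
Proof.
rewrite Kill_br /Ctab /tab10 mxE.
case: l => [[|[|[|[|[|[|[|[|[|[|l]]]]]]]]]] Hl] //;
case: m => [[|[|[|[|[|[|[|[|[|[|m]]]]]]]]]] Hm] //=;
rewrite /Xn /=; rewrite /nil_e /xi /H /Xa1 /Xa2 /Xa3 /Xa23 /Xm1 /Xm2 /Xm3 /Xm12 /Xm23 /Xm123 /bra !m4_E //; m4s; rewrite m4_tr /=; ring.
Qed.


Lemma CY t : 1 - t != 0 -> Ctab t *m Ytab t = 1%:M.
Proof.
move=> ht; apply/matrixP => i j; rewrite !mxE sum10 /Ctab /Ytab /tab10 !mxE !inordK //.
case: i => [[|[|[|[|[|[|[|[|[|[|i]]]]]]]]]] Hi] //;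
case: j => [[|[|[|[|[|[|[|[|[|[|j]]]]]]]]]] Hj] //=.
all: (field; exact: ht).
Qed.

Ltac unf := rewrite /Xn /=; rewrite /nil_e /xi /hplus /H /Xa1 /Xa2 /Xa3 /Xa23 /Xm1 /Xm2 /Xm3 /Xm12 /Xm23 /Xm123 /bra !m4_E //; m4s.

Lemma xi_tr t : \tr (xi t) = 0.
Proof. unf; rewrite m4_tr /=; ring. Qed.

Lemma xi_perp t (j : 'I_10) : Kill (xi t) (Xn j) = 0.
Proof.
rewrite Kill_tr xi_tr mulr0 mul0r subr0.
case: j => [[|[|[|[|[|[|[|[|[|[|j]]]]]]]]]] Hj] //; unf; rewrite m4_tr /=; ring.
Qed.

Lemma ge_a : in_ge (E 0 2).
Proof. split; rewrite /in_sl4; unf; [rewrite m4_tr /=; ring|rewrite m4_0; enum4; ring]. Qed.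
Lemma ge_b : in_ge (E 0 3).
Proof. split; rewrite /in_sl4; unf; [rewrite m4_tr /=; ring|rewrite m4_0; enum4; ring]. Qed.

Definition dav : 'cV[algC]_10 := \col_(l < 10) nth 0 [:: 8%:R; 8%:R; 0; 0; 0; 0; 0; 0; 0; 0] l.
Definition dbv (t : algC) : 'cV[algC]_10 :=
  \col_(l < 10) nth 0 [:: 0; 0; 0; 0; 0; 8%:R; - 8%:R; 8%:R * t; 0; 0] l.

Lemma da_entry t (l : 'I_10) : Kill (xi t) (bra (Xn l) (E 0 2)) = dav l 0.
Proof.
rewrite Kill_br /dav mxE.
case: l => [[|[|[|[|[|[|[|[|[|[|l]]]]]]]]]] Hl] //; unf; rewrite m4_tr /=; ring.
Qed.
Lemma db_entry t (l : 'I_10) : Kill (xi t) (bra (Xn l) (E 0 3)) = dbv t l 0.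
Proof.
rewrite Kill_br /dbv mxE.
case: l => [[|[|[|[|[|[|[|[|[|[|l]]]]]]]]]] Hl] //; unf; rewrite m4_tr /=; ring.
Qed.
Lemma Kab t : Kill (xi t) (bra (E 0 2) (E 0 3)) = 0.
Proof. rewrite Kill_br; unf; rewrite m4_tr /=; ring. Qed.


Lemma tab10E l i j : (i < 10)%N -> (j < 10)%N -> tab10 l (inord i) (inord j) = nth 0 (nth [::] l i) j.
Proof. by move=> Hi Hj; rewrite mxE !inordK. Qed.
Lemma col10E (l : seq algC) i : (i < 10)%N -> (\col_(k < 10) nth 0 l k) (inord i) 0 = nth 0 l i.
Proof. by move=> Hi; rewrite mxE inordK. Qed.

Definition wtab (t : algC) : 'cV[algC]_10 := \col_(l < 10) nth 0
  [:: (1 - 2%:R * t) / (1 - t); (1 - 2%:R * t) / (1 - t); 0; - t / (1 - t); (t - 1) / (1 - t);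
      0; 0; 0; 0; - t / (1 - t)] l.

Lemma Ydb t : 1 - t != 0 -> Ytab t *m dbv t = wtab t.
Proof.
move=> ht; apply/matrixP => i j; rewrite !mxE sum10 /Ytab /tab10 /dbv /wtab !mxE !inordK //.
case: i => [[|[|[|[|[|[|[|[|[|[|i]]]]]]]]]] Hi] //=.
all: (field; exact: ht).
Qed.

Lemma fval t : 1 - t != 0 ->
  ((dav^T *m Ytab t) *m dbv t) 0 0 = (16%:R - 32%:R * t) / (1 - t).
Proof.
move=> ht; rewrite -mulmxA Ydb //.
rewrite !mxE sum10 /dav /wtab !mxE !inordK //=.
field; exact: ht.
Qed.


Lemma Xn_inord j : (j < 10)%N ->
  Xn (inord j) = nth 0 [:: H 0; H 1; Xa1; Xa2; Xm2; Xm1 + Xa3; Xm3; Xm12; Xm23; Xm123] j.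
Proof. by move=> Hj; rewrite /Xn inordK. Qed.

Definition ent (B : M4) i j := B (inord i) (inord j).
Lemma ent_m4 f i j : (i < 4)%N -> (j < 4)%N -> ent (m4 f) i j = f i j.
Proof. by move=> Hi Hj; rewrite /ent m4_entry. Qed.
Lemma ent0 i j : ent 0 i j = 0.
Proof. by rewrite /ent mxE. Qed.

Definition Lb (B : M4) : M4 := m4l
  [:: [:: ent B 0 1 + ent B 1 3; ent B 0 3; 0; 0];
      [:: - ent B 0 0; ent B 1 3; - ent B 0 2; 0];
      [:: ent B 2 1; ent B 2 3; - ent B 0 1 - 2%:R * ent B 1 3; - ent B 0 0];
      [:: - ent B 1 0; - ent B 0 0 - ent B 1 1; - ent B 1 2; 0]].

Lemma part1a x : in_ge x -> in_n1 x -> x = 0.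
Proof.
move=> [_ bx] [c xE].
have key : x = Lb (bra x nil_e).
  rewrite xE sum10 !Xn_inord //=; unf; rewrite /Lb /m4l !ent_m4 //; enum4; ring.
rewrite key bx /Lb /m4l !ent0 m4_0; enum4; ring.
Qed.

Lemma part1b x : in_sl4 x -> exists y z, in_ge y /\ in_n1 z /\ x = y + z.
Proof.
rewrite /in_sl4 => hx.
have h22 : ent x 2 2 = - (ent x 0 0 + ent x 1 1 + ent x 3 3).
  move: hx; rewrite (m4_of x) m4_tr /= => hx.
  by rewrite /ent !m4_entry // -[LHS]subr0 -hx; ring.
exists (ent x 0 2 *: E 0 2 + ent x 0 3 *: E 0 3 + ent x 1 3 *: (E 0 1 + E 1 3)
   + (ent x 2 3 - ent x 1 0) *: E 2 3 + ent x 3 3 *: (E 0 0 + E 1 1 - 3%:R *: E 2 2 + E 3 3)).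
exists (\sum_(j < 10) (nth 0 [:: ent x 0 0 - ent x 3 3; ent x 0 0 + ent x 1 1 - 2%:R * ent x 3 3;
    ent x 0 1 - ent x 1 3; ent x 1 2; ent x 2 1; ent x 1 0; ent x 3 2; ent x 2 0; ent x 3 1; ent x 3 0] j) *: Xn j).
split; [split|split].
- rewrite /in_sl4; unf; rewrite m4_tr /=; ring.
- unf; rewrite m4_0; enum4; ring.
- by eexists.
- rewrite {1}(m4_of x) sum10 !Xn_inord // !inordK //=; unf.
  enum4; rewrite -/(ent x _ _); try rewrite h22; ring.
Qed.

Lemma part2 : ~ (forall x, in_n1 x -> in_n1 (bra hplus x)).
Proof.
move=> h.
have phi0 z : in_n1 z -> ent z 1 0 - ent z 2 3 = 0.
  move=> [c ->]; rewrite sum10 !Xn_inord //=; unf; rewrite !ent_m4 //=; ring.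
have hx : in_n1 (Xm1 + Xa3).
  exists (fun j => nth 0 [:: 0; 0; 0; 0; 0; 1; 0; 0; 0; 0] j).
  rewrite sum10 !Xn_inord // !inordK //=; unf; enum4; ring.
have := phi0 _ (h _ hx).
have -> : ent (bra hplus (Xm1 + Xa3)) 1 0 - ent (bra hplus (Xm1 + Xa3)) 2 3 = - 4%:R.
  unf; rewrite !ent_m4 //=; ring.
by move/eqP; rewrite oppr_eq0 pnatr_eq0.
Qed.

Lemma mpoly_line k (P : {mpoly algC[k]}) (u v : 'I_k -> algC) :
  exists p : {poly algC}, forall t, P.@[fun s => u s + t * v s] = p.[t].
Proof.
exists (\sum_(m <- msupp P) (P@_m)%:P * \prod_i ((u i)%:P + (v i)%:P * 'X) ^+ m i).
move=> t; rewrite mevalE horner_sum; apply: eq_bigr => m _.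
rewrite hornerM hornerC horner_prod; congr (_ * _); apply: eq_bigr => i _.
by rewrite horner_exp hornerD hornerC hornerM hornerC hornerX mulrC.
Qed.

Lemma no_poly (p : {poly algC}) :
  ~ (forall t, 1 - t != 0 -> p.[t] = (16%:R - 32%:R * t) / (1 - t)).
Proof.
move=> hp.
set R := p * ((1 : algC)%:P - 'X) - ((16%:R : algC)%:P - (32%:R : algC)%:P * 'X).
have R0 : R = 0.
  apply: (@roots_geq_poly_eq0 _ R [seq (i.+2)%:R | i <- iota 0 (size R)]).
  - apply/allP => x /mapP [i _ ->]; rewrite /root /R.
    have ht : 1 - (i.+2)%:R != 0 :> algC.
      rewrite subr_eq0 (_ : 1 = 1%:R) // eqr_nat //.
    rewrite !(hornerD, hornerN, hornerM, hornerC, hornerX) hp //. move: ht; move: ((i.+2)%:R : algC) => s ht; apply/eqP; field; exact: ht.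
  - rewrite map_inj_uniq ?iota_uniq // => a b /eqP; rewrite eqr_nat => /eqP [].
    done.
  - by rewrite size_map size_iota.
have : R.[1] = 0 by rewrite R0 horner0.
rewrite /R !(hornerD, hornerN, hornerM, hornerC, hornerX) subrr mulr0 add0r.
rewrite (_ : - (16%:R - 32%:R * 1) = (16%:R) :> algC); last by ring.
by move/eqP; rewrite pnatr_eq0.
Qed.

Lemma tr_sum k (G : 'I_k -> M4) : \tr (\sum_s G s) = \sum_s \tr (G s).
Proof. exact: raddf_sum. Qed.

Lemma Kill_addr x y z : Kill x (y + z) = Kill x y + Kill x z.
Proof. rewrite !Kill_tr mulmxDr !mxtraceD; ring. Qed.
Lemma Kill_subl x y z : Kill (x - y) z = Kill x z - Kill y z.
Proof. rewrite !Kill_tr mulmxBl !raddfB /=; ring. Qed.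
Lemma Kill_lin1 x y a z : Kill (x + a *: y) z = Kill x z + a * Kill y z.
Proof. rewrite !Kill_tr mulmxDl -scalemxAl !mxtraceD !mxtraceZ; ring. Qed.

Lemma Kill_scaler x a y : Kill x (a *: y) = a * Kill x y.
Proof. rewrite !Kill_tr -scalemxAr !mxtraceZ; ring. Qed.
Lemma Kill_scalel x a y : Kill (a *: x) y = a * Kill x y.
Proof. rewrite !Kill_tr -scalemxAl !mxtraceZ; ring. Qed.
Lemma Kill_addl x y z : Kill (x + y) z = Kill x z + Kill y z.
Proof. rewrite !Kill_tr mulmxDl !mxtraceD; ring. Qed.
Lemma Kill0r x : Kill x 0 = 0.
Proof. by rewrite Kill_tr mulmx0 !raddf0 !mulr0 subr0. Qed.
Lemma Kill0l x : Kill 0 x = 0.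
Proof. by rewrite Kill_tr mul0mx !raddf0 !mulr0 mul0r subr0. Qed.

Lemma Kill_sumr k x (c : 'I_k -> algC) (F : 'I_k -> M4) :
  Kill x (\sum_s c s *: F s) = \sum_s c s * Kill x (F s).
Proof.
elim/big_rec2: _ => [|i y1 y2 _ <-]; first exact: Kill0r.
by rewrite Kill_addr Kill_scaler.
Qed.
Lemma Kill_suml k y (c : 'I_k -> algC) (F : 'I_k -> M4) :
  Kill (\sum_s c s *: F s) y = \sum_s c s * Kill (F s) y.
Proof.
elim/big_rec2: _ => [|i y1 y2 _ <-]; first exact: Kill0l.
by rewrite Kill_addl Kill_scalel.
Qed.
Lemma bra_sumr k y (c : 'I_k -> algC) (F : 'I_k -> M4) :
  bra y (\sum_s c s *: F s) = \sum_s c s *: bra y (F s).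
Proof.
rewrite /bra mulmx_sumr mulmx_suml -sumrB; apply: eq_bigr => s _.
by rewrite scalerBr scalemxAr scalemxAl.
Qed.
Lemma bra_suml k y (c : 'I_k -> algC) (F : 'I_k -> M4) :
  bra (\sum_s c s *: F s) y = \sum_s c s *: bra (F s) y.
Proof.
rewrite /bra mulmx_sumr mulmx_suml -sumrB; apply: eq_bigr => s _.
by rewrite scalerBr scalemxAl scalemxAr.
Qed.

Definition Lk (x : M4) : M4 := m4l
  [:: [:: (Kill x (E 0 0 - E 3 3) - (Kill x (E 0 0 - E 3 3) + Kill x (E 1 1 - E 3 3) + Kill x (E 2 2 - E 3 3)) / 4%:R) / 8%:R;
          Kill x (E 1 0) / 8%:R; Kill x (E 2 0) / 8%:R; Kill x (E 3 0) / 8%:R];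
      [:: Kill x (E 0 1) / 8%:R;
          (Kill x (E 1 1 - E 3 3) - (Kill x (E 0 0 - E 3 3) + Kill x (E 1 1 - E 3 3) + Kill x (E 2 2 - E 3 3)) / 4%:R) / 8%:R;
          Kill x (E 2 1) / 8%:R; Kill x (E 3 1) / 8%:R];
      [:: Kill x (E 0 2) / 8%:R; Kill x (E 1 2) / 8%:R;
          (Kill x (E 2 2 - E 3 3) - (Kill x (E 0 0 - E 3 3) + Kill x (E 1 1 - E 3 3) + Kill x (E 2 2 - E 3 3)) / 4%:R) / 8%:R;
          Kill x (E 3 2) / 8%:R];
      [:: Kill x (E 0 3) / 8%:R; Kill x (E 1 3) / 8%:R; Kill x (E 2 3) / 8%:R;
          (- (Kill x (E 0 0 - E 3 3) + Kill x (E 1 1 - E 3 3) + Kill x (E 2 2 - E 3 3)) / 4%:R) / 8%:R]].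

Lemma m4_1 : (1%:M : M4) = m4 (fun i j => (i == j)%:R).
Proof. by apply/matrixP => i j; rewrite !mxE. Qed.

Lemma Lk_id x : x = Lk x + (\tr x / 4%:R) *: 1%:M.
Proof.
rewrite /Lk /m4l !Kill_tr (m4_of x) m4_1 !m4_E //; m4s; rewrite !m4_tr /=.
m4s; enum4; field; done.
Qed.

Lemma nondeg d : \tr d = 0 -> (forall y, \tr y = 0 -> Kill d y = 0) -> d = 0.
Proof.
move=> hd hy; rewrite (Lk_id d) hd mul0r scale0r addr0 /Lk.
rewrite !hy; try (rewrite !m4_E // ; m4s; rewrite m4_tr /=; ring).
rewrite /m4l m4_0; enum4; ring.
Qed.

Lemma trB (a b : M4) : \tr (a - b) = \tr a - \tr b.
Proof. exact: raddfB. Qed.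

Section P3.
Variables (k : nat) (Z Zb : 'I_k -> M4).
Hypothesis hZge : forall s, in_ge (Z s).
Hypothesis hZspan : forall y, in_ge y -> exists c : 'I_k -> algC, y = \sum_s c s *: Z s.
Hypothesis hZbsl : forall s, in_sl4 (Zb s).
Hypothesis hZbZ : forall s i, Kill (Zb s) (Z i) = (s == i)%:R.
Hypothesis hZbX : forall s j, Kill (Zb s) (Xn j) = 0.

Definition qt (t : algC) : 'I_k -> algC := fun s => Kill (xi t) (Z s).

Lemma qZ_xi t : qZ Zb (qt t) = xi t.
Proof.
apply/eqP; rewrite eq_sym -subr_eq0; apply/eqP; apply: nondeg.
  rewrite trB xi_tr /qZ tr_sum big1 ?subr0 // => s _.
  by rewrite mxtraceZ (hZbsl s : \tr (Zb s) = 0) mulr0.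
move=> y hy; have [y1 [z1 [hy1 [[c' hz1] ->]]]] := part1b y hy.
have [c hc] := hZspan _ hy1.
rewrite hc hz1 Kill_addr !Kill_sumr !big1 ?addr0 // => s _.
  by rewrite Kill_subl xi_perp /qZ Kill_suml big1 ?subr0 ?mulr0 // => r _; rewrite hZbX mulr0.
rewrite Kill_subl /qZ Kill_suml (bigD1 s) //= hZbZ eqxx mulr1 big1 ?addr0.
  by rewrite /qt subrr mulr0.
by move=> r /negbTE hr; rewrite hZbZ hr mulr0.
Qed.

Lemma Cq t : C_N Zb (qt t) = Ctab t.
Proof. by apply/matrixP => l m; rewrite mxE qZ_xi C_entry. Qed.

Lemma Cunit t : 1 - t != 0 -> C_N Zb (qt t) \in unitmx.
Proof. by move=> ht; rewrite Cq; case: (mulmx1_unit (CY _ ht)). Qed.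

Lemma Cinv t : 1 - t != 0 -> invmx (C_N Zb (qt t)) = Ytab t.
Proof.
move=> ht; have hu := Cunit _ ht; move: hu; rewrite Cq => hu.
by rewrite -[invmx _]mulmx1 -(CY _ ht) mulmxA mulVmx ?mul1mx.
Qed.

Variables (al be : 'I_k -> algC).
Hypothesis hal : E 0 2 = \sum_s al s *: Z s.
Hypothesis hbe : E 0 3 = \sum_s be s *: Z s.

Definition alc : 'cV[algC]_k := \col_i al i.
Definition bec : 'cV[algC]_k := \col_i be i.
Definition Sform (M : 'M[algC]_k) := ((alc^T *m M) *m bec) 0 0.

Lemma Sform_E M : Sform M = \sum_j (\sum_i al i * M i j) * be j.
Proof.
rewrite /Sform mxE; apply: eq_bigr => j _; rewrite !mxE; congr (_ * _).
by apply: eq_bigr => i _; rewrite !mxE.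
Qed.

Lemma Dbe t : D_N Z Zb (qt t) *m bec = dbv t.
Proof.
apply/colP => l; rewrite -db_entry hbe bra_sumr Kill_sumr !mxE.
by apply: eq_bigr => j _; rewrite !mxE qZ_xi mulrC.
Qed.
Lemma Dal t : D_N Z Zb (qt t) *m alc = dav.
Proof.
apply/colP => l; rewrite -(da_entry t) hal bra_sumr Kill_sumr !mxE.
by apply: eq_bigr => j _; rewrite !mxE qZ_xi mulrC.
Qed.

Lemma SA t : Sform (A_N Z Zb (qt t)) = 0.
Proof.
transitivity (Kill (xi t) (bra (E 0 2) (E 0 3))); last exact: Kab.
rewrite Sform_E hal bra_suml Kill_sumr.
under [RHS]eq_bigr => i _ do rewrite hbe bra_sumr Kill_sumr mulr_sumr.
rewrite [RHS]exchange_big /=; apply: eq_bigr => j _.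
rewrite mulr_suml; apply: eq_bigr => i _.
rewrite mxE qZ_xi; ring.
Qed.

Lemma SLam t : 1 - t != 0 -> Sform (Lambda_N Z Zb (qt t)) = (16%:R - 32%:R * t) / (1 - t).
Proof.
move=> ht; rewrite /Lambda_N.
have -> : Sform (A_N Z Zb (qt t) + (D_N Z Zb (qt t))^T *m invmx (C_N Zb (qt t)) *m D_N Z Zb (qt t))
  = Sform (A_N Z Zb (qt t)) + (((D_N Z Zb (qt t) *m alc)^T *m invmx (C_N Zb (qt t))) *m (D_N Z Zb (qt t) *m bec)) 0 0.
  by rewrite /Sform mulmxDr mulmxDl mxE trmx_mul !mulmxA.
by rewrite SA add0r Dal Dbe Cinv // fval.
Qed.

End P3.

Lemma meval_sum k n (v : 'I_n -> algC) (F : 'I_k -> {mpoly algC[n]}) :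
  (\sum_i F i).@[v] = \sum_i (F i).@[v].
Proof.
elim/big_rec2: _ => [|i a b _ <-]; first exact: meval0.
by rewrite mevalD.
Qed.

Lemma part3 (k : nat) (Z Zb : 'I_k -> M4) :
     basis_ge Z -> dual_Z Z Zb ->
     exists i j : 'I_k, ~ exists P : {mpoly algC[k]},
       forall q : 'I_k -> algC, C_N Zb q \in unitmx ->
         Lambda_N Z Zb q i j = P.@[q].
Proof.
move=> [hZge [hZind hZspan]] [hZbsl [hZbZ hZbX]].
have [al hal] := hZspan _ ge_a.
have [be hbe] := hZspan _ ge_b.
apply: NNPP => hne.
have hall : forall i j : 'I_k, exists P : {mpoly algC[k]},
    forall q, C_N Zb q \in unitmx -> Lambda_N Z Zb q i j = P.@[q].
  by move=> i j; apply: NNPP => h; apply: hne; exists i, j.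
have h1 : forall i, exists Pi : 'I_k -> {mpoly algC[k]},
    forall j q, C_N Zb q \in unitmx -> Lambda_N Z Zb q i j = (Pi j).@[q].
  by move=> i; exact: (@fin_all_exists _ (fun _ => {mpoly algC[k]}) _ (hall i)).
have [Pf hPf] := @fin_all_exists _ (fun _ => 'I_k -> {mpoly algC[k]}) _ h1.
pose Q := \sum_(j < k) \sum_(i < k) (al i * be j) *: Pf i j.
pose u s := Kill (E 2 0 + E 3 1) (Z s).
pose v s := Kill (E 3 2 - E 0 1) (Z s).
have [p hp] := mpoly_line _ Q u v.
apply: (no_poly p) => t ht.
rewrite -hp.
have qE : (fun s => u s + t * v s) =1 qt k Z t.
  by move=> s; rewrite /qt /xi Kill_lin1.
rewrite (meval_eq _ qE) -(SLam _ _ _ hZspan hZbsl hZbZ hZbX _ _ hal hbe _ ht) Sform_E /Q meval_sum.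
apply: eq_bigr => j _; rewrite meval_sum mulr_suml; apply: eq_bigr => i _.
rewrite mevalZ (hPf i j) ?(Cunit _ _ _ hZspan hZbsl hZbZ hZbX _ ht) //; ring.
Qed.

Theorem mainTheorem7 :
  (* n_1 is a complement of g^e in g = sl_4 *)
  ((forall x, in_ge x -> in_n1 x -> x = 0) /\
   (forall x, in_sl4 x -> exists y z, in_ge y /\ in_n1 z /\ x = y + z)) /\
  (* n_1 is not ad h^+ - invariant *)
  ~ (forall x, in_n1 x -> in_n1 (bra hplus x)) /\
  (* Lambda_{N_1} is not polynomial: for any basis Z of g^e (with dual elements Zb),
     some entry of Lambda_{N_1}(q) agrees with no polynomial on the domain where C_N(q)
     is invertible *)
  (forall (k : nat) (Z Zb : 'I_k -> M4),
     basis_ge Z -> dual_Z Z Zb ->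
     exists i j : 'I_k, ~ exists P : {mpoly algC[k]},
       forall q : 'I_k -> algC, C_N Zb q \in unitmx ->
         Lambda_N Z Zb q i j = P.@[q]).
Proof.
split; [split; [exact: part1a | exact: part1b] | split; [exact: part2 | exact: part3]].
Qed.
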